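(* Let the sequences be generated by Algorithm iMBA and suppose Assumptions 2 and 3 hold. Then $\omega(x^0)$ is nonempty and compact, and $\lim_{k\to\infty}\|x^k-\overline x^k\|=0$ and $\lim_{k\to\infty}\|x^{k+1}-\overline x^k\|=0$.
   Context: Problem (P): $\min_{x\in\mathbb{R}^n}F(x):=g_0(x)+\delta_{\mathbb{R}^m_-}(g(x))+\phi(x)$, where $g=(g_1,\dots,g_m)^\top$ and $\delta_{\mathbb{R}^m_-}$ is the indicator of the nonpositive orthant. Assumption 1 (standing): (i) $g_0:\mathbb{R}^n\to(-\infty,\infty]$ is locally Lipschitz and upper-$\mathcal C^2$ at every point of an open convex set $\mathcal O\supset\Gamma:=\{x:g(x)\in\mathbb{R}^m_-\}\neq\emptyset$, and each $g_i:\mathbb{R}^n\to\mathbb{R}$, $i\in[m]$, is locally Lipschitz and upper-$\mathcal C^2$ at every point of $\mathbb{R}^n$; (ii) $\phi:\mathbb{R}^n\to\mathbb{R}$ is convex and $F$ is bounded below on $\Gamma$. $\partial$ denotes the limiting subdifferential; $\partial g(x):=\{V\in\mathbb{R}^{n\times m}: V_i\in\partial g_i(x)\ \forall i\}$. Define $G(x,s,V,L):=g(s)+V^\top(x-s)+\tfrac12\|x-s\|^2L$. Algorithm iMBA (parameters $0<\mu_{\min}\le\mu_{\max}$, $0<L_{\min}\le L_{\max}$, $M,\beta_C,\beta_S,\alpha>0$, $\tau>1$, $x^0\in\Gamma$): at iteration $k$ choose $\xi^k\in\partial g_0(x^k)$, $V^k\in\partial g(x^k)$, $\mu_{k,0}\in[\mu_{\min},\mu_{\max}]$,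 $L^{k,0}\in[L_{\min},L_{\max}]^m$; for $j=0,1,\dots$ choose self-adjoint $\mathcal Q_{k,j}$ with $\mu_{k,j}\mathcal I\preceq\mathcal Q_{k,j}\preceq(\mu_{k,j}+M)\mathcal I$, let $F_{k,j}(x):=g_0(x^k)+\langle\xi^k,x-x^k\rangle+\frac12\langle x-x^k,\mathcal Q_{k,j}(x-x^k)\rangle+\phi(x)$, $\Gamma_{k,j}:=\{x:G(x,x^k,V^k,L^{k,j})\in\mathbb{R}^m_-\}$, $\overline x^{k,j}$ the unique minimizer of $F_{k,j}$ on $\Gamma_{k,j}$, and compute $y^{k,j}$, $v^{k,j}\in\partial\phi(y^{k,j})$, $\lambda^{k,j}\in\mathbb{R}^m_+$ with $F_{k,j}(y^{k,j})\le F_{k,j}(x^k)$, $(-\langle\lambda^{k,j},G(y^{k,j},x^k,V^k,L^{k,j})\rangle)_++\|[G(y^{k,j},x^k,V^k,L^{k,j})]_+\|_\infty\le\frac{\beta_C}2\|y^{k,j}-x^k\|^2$ and $\|\xi^k+\mathcal Q_{k,j}(y^{k,j}-x^k)+v^{k,j}+V^k\lambda^{k,j}+\langle L^{k,j},\lambda^{k,j}\rangle(y^{k,j}-x^k)\|\le\beta_S\|y^{k,j}-x^k\|$. If $g(y^{k,j})\in\mathbb{R}^m_-$ and $F(y^{k,j})\le F(x^k)-\frac\alpha2\|y^{k,j}-x^k\|^2$, accept ($j_k:=j$); else if $g(y^{k,j})\notin\mathbb{R}^m_-$ set $L^{k,j+1}=\tau L^{k,j}$, $\mu_{k,j+1}=\mu_{k,j}$;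 else $L^{k,j+1}=L^{k,j}$, $\mu_{k,j+1}=\tau\mu_{k,j}$. Then $x^{k+1}:=y^{k,j_k}$, $(\mu_k,\mathcal Q_k,L^k,v^{k+1},\lambda^{k+1}):=(\mu_{k,j_k},\mathcal Q_{k,j_k},L^{k,j_k},v^{k,j_k},\lambda^{k,j_k})$, $\overline x^k:=\overline x^{k,j_k}$. Assumption 2: for each $k,j$, the multifunction $x\mapsto G(x,x^k,V^k,L^{k,j})-\mathbb{R}^m_-$ is metrically subregular at $(\overline x^{k,j},0)$. Assumption 3: $\{x^k\}$ is bounded; $\omega(x^0)$ denotes its set of cluster points. *)

(* Defs.v *)
From HB Require Import structures.
From mathcomp Require Import all_boot all_order all_algebra.
From mathcomp Require Import all_classical all_reals all_analysis.
Set Implicit Arguments. Unset Strict Implicit. Unset Printing Implicit Defensive.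
Import Order.TTheory GRing.Theory Num.Theory.
Import numFieldNormedType.Exports.
Local Open Scope classical_set_scope.
Local Open Scope ring_scope.

Section Defs.
Variables (R : realType) (n m : nat).

Definition dotv (p : nat) (a b : 'cV[R]_p) : R := \sum_i a i 0 * b i 0.
Definition enorm (p : nat) (a : 'cV[R]_p) : R := Num.sqrt (dotv a a).

Definition posinf_norm (p : nat) (w : 'cV[R]_p) : R :=
  \big[Num.max/0]_(i < p) Num.max (w i 0) 0.

Definition nonpos (p : nat) (w : 'cV[R]_p) : Prop := forall i, w i 0 <= 0.

Definition ebasis (i : 'I_n) : 'cV[R]_n := delta_mx i 0.

Definition open_ball (x : 'cV[R]_n) (d : R) : set 'cV[R]_n :=
  [set z | enorm (z - x) < d].

Definition cvx_set (O : set 'cV[R]_n) : Prop :=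
  forall x y (t : R), O x -> O y -> 0 <= t <= 1 -> O (t *: x + (1 - t) *: y).

Definition cvx_fun (f : 'cV[R]_n -> R) : Prop :=
  forall x y (t : R), 0 <= t <= 1 ->
    f (t *: x + (1 - t) *: y) <= t * f x + (1 - t) * f y.

Definition loc_lipschitz_at (f : 'cV[R]_n -> \bar R) (x : 'cV[R]_n) : Prop :=
  exists2 d : R, 0 < d & exists Lc : R, forall z w,
    open_ball x d z -> open_ball x d w ->
    f z \is a fin_num /\ `| fine (f z) - fine (f w) | <= Lc * enorm (z - w).

(* upper-C^2 at x (Rockafellar--Wets, Def. 10.29, with max replaced by min):
   on a neighbourhood of x, f is the pointwise minimum over a nonempty compact
   parameter set K of functions h t of class C^2, with h t z, the partial
   derivatives and the second partial derivatives jointly continuous in (t,z). *)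
Definition upperC2_at (f : 'cV[R]_n -> \bar R) (x : 'cV[R]_n) : Prop :=
  exists2 d : R, 0 < d &
  exists (T : topologicalType) (K : set T) (h : T -> 'cV[R]_n -> R),
    [/\ compact K, K !=set0,
      (forall z, open_ball x d z ->
          (exists2 t, K t & f z = (h t z)%:E) /\
          (forall t, K t -> (f z <= (h t z)%:E)%E)),
      (forall t z, K t -> open_ball x d z -> forall i j,
          derivable (h t) z (ebasis i) /\
          derivable (fun w => 'D_(ebasis i) (h t) w) z (ebasis j)) &
      [/\ {within K `*` open_ball x d, continuous (fun p => h p.1 p.2)},
          (forall i, {within K `*` open_ball x d,
             continuous (fun p => 'D_(ebasis i) (h p.1) p.2)}) &
          (forall i j, {within K `*` open_ball x d,
             continuous (fun p => 'D_(ebasis j) (fun w => 'D_(ebasis i) (h p.1) w) p.2)})]].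

(* Frechet (regular) subdifferential: liminf_{z->x} (f z - f x - <v,z-x>)/|z-x| >= 0 *)
Definition frechet_subdiff (f : 'cV[R]_n -> \bar R) (x v : 'cV[R]_n) : Prop :=
  f x \is a fin_num /\
  forall eps : R, 0 < eps -> exists2 d : R, 0 < d & forall z, open_ball x d z ->
    ((fine (f x) + dotv v (z - x) - eps * enorm (z - x))%:E <= f z)%E.

Definition limiting_subdiff (f : 'cV[R]_n -> \bar R) (x v : 'cV[R]_n) : Prop :=
  f x \is a fin_num /\
  exists (z w : nat -> 'cV[R]_n),
    [/\ forall j, frechet_subdiff f (z j) (w j),
        (fun j => enorm (z j - x)) @ \oo --> 0,
        (fun j => fine (f (z j))) @ \oo --> fine (f x) &
        (fun j => enorm (w j - v)) @ \oo --> 0].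

Definition dist_set (p : nat) (a : 'cV[R]_p) (A : set 'cV[R]_p) : R :=
  inf [set enorm (a - b) | b in A].

Definition metric_subregular (S : 'cV[R]_n -> set 'cV[R]_m)
    (xb : 'cV[R]_n) (yb : 'cV[R]_m) : Prop :=
  S xb yb /\
  exists2 kappa : R, 0 < kappa & exists2 d : R, 0 < d & forall x, open_ball xb d x ->
    dist_set x [set z | S z yb] <= kappa * dist_set yb (S x).

Definition gvec (g : 'I_m -> 'cV[R]_n -> R) (x : 'cV[R]_n) : 'cV[R]_m :=
  \col_i g i x.

Definition Gmodel (g : 'I_m -> 'cV[R]_n -> R) (x s : 'cV[R]_n)
    (V : 'M[R]_(n, m)) (L : 'cV[R]_m) : 'cV[R]_m :=
  gvec g s + V^T *m (x - s) + (enorm (x - s) ^+ 2 / 2) *: L.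

Definition Fobj (g0 : 'cV[R]_n -> \bar R) (g : 'I_m -> 'cV[R]_n -> R)
    (phi : 'cV[R]_n -> R) (x : 'cV[R]_n) : \bar R :=
  (g0 x + (if `[< nonpos (gvec g x) >] then 0 else +oo) + (phi x)%:E)%E.

Definition Fsub (g0xk : R) (xk xi : 'cV[R]_n) (Q : 'M[R]_n)
    (phi : 'cV[R]_n -> R) (x : 'cV[R]_n) : R :=
  g0xk + dotv xi (x - xk) + dotv (x - xk) (Q *m (x - xk)) / 2 + phi x.

Definition cluster_points (x : nat -> 'cV[R]_n) : set 'cV[R]_n :=
  [set p | forall eps : R, 0 < eps -> forall N, exists2 k, (N <= k)%N & enorm (x k - p) < eps].

End Defs.

(* Main.v *)
Require Import Defs.
From HB Require Import structures.
From mathcomp Require Import all_boot all_order all_algebra.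
From mathcomp Require Import all_classical all_reals all_analysis.
From mathcomp.algebra_tactics Require Import ring lra.
Import Order.TTheory GRing.Theory Num.Theory.
Import numFieldNormedType.Exports.
Local Open Scope classical_set_scope.
Local Open Scope ring_scope.

Section VecAlg.
Context {R : realType} {n : nat}.
Implicit Types (a b c : 'cV[R]_n).

Lemma dotvC a b : dotv a b = dotv b a.
Proof. by rewrite /dotv; apply: eq_bigr => i _; rewrite mulrC. Qed.

Lemma dotvDl a b c : dotv (a + b) c = dotv a c + dotv b c.
Proof. by rewrite /dotv -big_split; apply: eq_bigr => i _; rewrite mxE mulrDl. Qed.

Lemma dotvDr a b c : dotv a (b + c) = dotv a b + dotv a c.
Proof. by rewrite dotvC dotvDl !(dotvC a). Qed.

Lemma dotvZl t a b : dotv (t *: a) b = t * dotv a b.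
Proof. by rewrite /dotv mulr_sumr; apply: eq_bigr => i _; rewrite mxE mulrA. Qed.

Lemma dotvZr t a b : dotv a (t *: b) = t * dotv a b.
Proof. by rewrite dotvC dotvZl dotvC. Qed.

Lemma dotvNl a b : dotv (- a) b = - dotv a b.
Proof. by rewrite -scaleN1r dotvZl mulN1r. Qed.

Lemma dotvNr a b : dotv a (- b) = - dotv a b.
Proof. by rewrite dotvC dotvNl dotvC. Qed.

Lemma dotvBl a b c : dotv (a - b) c = dotv a c - dotv b c.
Proof. by rewrite dotvDl dotvNl. Qed.

Lemma dotvBr a b c : dotv a (b - c) = dotv a b - dotv a c.
Proof. by rewrite dotvDr dotvNr. Qed.

Lemma dotv0l a : dotv 0 a = 0.
Proof. by rewrite /dotv big1 // => i _; rewrite mxE mul0r. Qed.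

Lemma dotv0r a : dotv a 0 = 0.
Proof. by rewrite dotvC dotv0l. Qed.

Lemma dotv_ge0 a : 0 <= dotv a a.
Proof. by rewrite /dotv sumr_ge0 // => i _; rewrite -expr2 sqr_ge0. Qed.

Lemma dotv_eq0 a : dotv a a = 0 -> a = 0.
Proof.
move=> /eqP; rewrite /dotv psumr_eq0; last by move=> i _; rewrite -expr2 sqr_ge0.
move=> /allP H; apply/matrixP => i j; rewrite ord1 mxE.
by have := H i (mem_index_enum _); rewrite -expr2 sqrf_eq0 => /eqP.
Qed.

Lemma enorm_ge0 a : 0 <= enorm a.
Proof. exact: sqrtr_ge0. Qed.

Lemma enorm_sq a : enorm a ^+ 2 = dotv a a.
Proof. by rewrite sqr_sqrtr // dotv_ge0. Qed.

Lemma enorm0 : enorm (0 : 'cV[R]_n) = 0.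
Proof. by rewrite /enorm dotv0l sqrtr0. Qed.

Lemma dotv_mulmx m (M : 'M[R]_(n, m)) a (b : 'cV[R]_m) :
  dotv a (M *m b) = dotv (M^T *m a) b.
Proof.
rewrite /dotv.
under eq_bigr do rewrite mxE mulr_sumr.
under [RHS]eq_bigr do rewrite mxE mulr_suml.
rewrite exchange_big /=; apply: eq_bigr => j _; apply: eq_bigr => i _.
by rewrite mxE mulrCA mulrA.
Qed.

Lemma CS_sq a b : dotv a b ^+ 2 <= dotv a a * dotv b b.
Proof.
have [Hb|Hb] := eqVneq (dotv b b) 0.
  by rewrite (dotv_eq0 b Hb) dotv0r expr0n /= mulr_ge0 ?dotv_ge0.
have Bp : 0 < dotv b b by rewrite lt0r Hb dotv_ge0.
set t := dotv a b / dotv b b.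
have := dotv_ge0 (a - t *: b).
rewrite !(dotvBl, dotvBr, dotvZl, dotvZr) (dotvC b a).
rewrite /t => H.
have : 0 <= dotv a a - dotv a b ^+ 2 / dotv b b.
  move: H; set A := dotv a a; set B := dotv b b; set C := dotv a b.
  have -> : A - C / B * C - C / B * (C - C / B * B) = A - C ^+ 2 / B.
    by rewrite /B; field; rewrite Hb.
  by [].
rewrite subr_ge0 ler_pdivrMr //.
Qed.

Lemma CS a b : `|dotv a b| <= enorm a * enorm b.
Proof.
rewrite /enorm -sqrtrM ?dotv_ge0 // -sqrtr_sqr ler_sqrt ?mulr_ge0 ?dotv_ge0 //.
exact: CS_sq.
Qed.

Lemma enormD a b : enorm (a + b) <= enorm a + enorm b.
Proof.
rewrite -(@ler_sqr _ (enorm (a+b))) ?nnegrE ?addr_ge0 ?enorm_ge0 //.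
rewrite enorm_sq sqrrD !(dotvDl, dotvDr) (dotvC b a) -!enorm_sq.
have := le_trans (ler_norm _) (CS a b).
set C := dotv a b; set X := enorm a; set Y := enorm b => HC.
rewrite mulr2n; lra.
Qed.

Lemma enormZ t a : enorm (t *: a) = `|t| * enorm a.
Proof.
by rewrite /enorm dotvZl dotvZr mulrA -expr2 sqrtrM ?sqr_ge0 // sqrtr_sqr.
Qed.

Lemma enormN a : enorm (- a) = enorm a.
Proof. by rewrite -scaleN1r enormZ normrN normr1 mul1r. Qed.

Lemma enormB a b : enorm (a - b) = enorm (b - a).
Proof. by rewrite -enormN opprB. Qed.

Lemma enorm_tri a b c : enorm (a - c) <= enorm (a - b) + enorm (b - c).
Proof. by rewrite (le_trans _ (enormD _ _)) // addrA subrK. Qed.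

Lemma entry_le_enorm a i : `|a i 0| <= enorm a.
Proof.
rewrite /enorm -sqrtr_sqr ler_sqrt ?dotv_ge0 // /dotv (bigD1 i) //= expr2 lerDl.
by rewrite sumr_ge0 // => j _; rewrite -expr2 sqr_ge0.
Qed.

Lemma enorm_small a (d e : R) : 0 <= d -> (forall i, `|a i 0| <= d) ->
  n%:R * d ^+ 2 < e ^+ 2 -> 0 < e -> enorm a < e.
Proof.
move=> d0 Ha Hde e0.
rewrite /enorm -(ger0_norm (ltW e0)) -sqrtr_sqr ltr_sqrt ?exprn_gt0 //.
apply: le_lt_trans Hde; rewrite /dotv.
have Hs : \sum_(i < n) a i 0 * a i 0 <= \sum_(i < n) d ^+ 2.
  apply: ler_sum => i _.
  by rewrite -expr2 -real_normK ?num_real // ler_sqr ?nnegrE.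
by rewrite sumr_const card_ord -mulr_natl in Hs.
Qed.

Lemma dotv_sum_nonpos (m : nat) (l w : 'cV[R]_m) :
  (forall i, 0 <= l i 0) -> nonpos w -> dotv l w <= 0.
Proof.
move=> Hl Hw; rewrite /dotv; apply: sumr_le0 => i _.
by rewrite mulr_ge0_le0.
Qed.

End VecAlg.
Section Topo.
Context {R : realType} {n : nat}.

Lemma nbhs_enorm (p : 'cV[R]_n) (eps : R) : 0 < eps ->
  nbhs p [set z | enorm (z - p) < eps].
Proof.
move=> e0; apply/nbhs_ballP.
set N : R := n%:R.
have N0 : 0 <= N by rewrite /N ler0n.
set d := eps / (N + 1).
have d0 : 0 < d by rewrite /d divr_gt0 // ltr_wpDl.
have Hd : eps = (N + 1) * d by rewrite /d mulrC divfK // gt_eqF // ltr_wpDl.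
exists d => // z [_ Hz] /=.
apply: (@enorm_small _ _ _ d); [exact: ltW| |by rewrite Hd; nra|done].
move=> i; rewrite !mxE distrC; apply: ltW; exact: Hz.
Qed.

Definition Box (c : R) := [set z : 'cV[R]_n | forall i, `|z i 0| <= c].

Lemma trmx_cont : continuous (fun v : 'rV[R]_n => v^T).
Proof.
move=> v B /nbhs_ballP [e e0 HB]; apply/nbhs_ballP; exists e => // w [_ Hw].
apply: HB; split => // i j; rewrite !mxE; exact: Hw.
Qed.

Lemma Box_compact c : compact (Box c).
Proof.
have -> : Box c = (fun v : 'rV[R]_n => v^T) @`
    [set v : 'rV[R]_n | forall i, (fun _ => `[- c, c]%classic) i (v ord0 i)].
  apply/seteqP; split => z /=.
    move=> Hz; exists z^T; last by rewrite trmxK.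
    by move=> i; rewrite mxE /= in_itv /= -ler_norml.
  move=> [v Hv <-] i; rewrite mxE.
  by have := Hv i; rewrite /= in_itv /= -ler_norml ord1.
have cA : compact [set v : 'rV[R]_n | forall i, (fun _ => `[- c, c]%classic) i (v ord0 i)].
  exact: (@rV_compact R n (fun _ => `[- c, c]%classic) (fun _ => @segment_compact R _ _)).
exact: (continuous_compact (continuous_subspaceT (@trmx_cont)) cA).
Qed.

Lemma bounded_cluster (x : nat -> 'cV[R]_n) (c : R) (S : set nat) :
  (forall k, enorm (x k) <= c) -> (forall N, exists2 k, (N <= k)%N & S k) ->
  exists2 p, Box c p & forall eps, 0 < eps -> forall N,
    exists k, [/\ (N <= k)%N, S k & enorm (x k - p) < eps].
Proof.
move=> Hc HS.
pose G := [set P : set nat | exists N, forall k, (N <= k)%N -> S k -> P k].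
have FG : Filter G.
  constructor.
  - by exists 0%N.
  - move=> P Q [N1 H1] [N2 H2]; exists (maxn N1 N2) => k Hk Sk.
    by split; [apply: H1|apply: H2] => //; apply: leq_trans Hk; rewrite ?leq_maxl ?leq_maxr.
  - by move=> P Q PQ [N H]; exists N => k Hk Sk; apply/PQ/H.
have PG : ProperFilter G.
  apply: Build_ProperFilter_ex => P [N H].
  by have [k Hk Sk] := HS N; exists k; apply: H.
have [p [Bp Cp]] : Box c `&` cluster (fmap x G) !=set0.
  apply: Box_compact; exists 0%N => k _ _ /= i.
  exact: le_trans (entry_le_enorm _ _) (Hc k).
exists p => // eps e0 N.
have FA : (fmap x G) [set z | exists k, [/\ (N <= k)%N, S k & z = x k]].
  by exists N => k Hk Sk /=; exists k.
have [z [[k [Hk Sk ->]] Hz]] := Cp _ _ FA (nbhs_enorm p eps e0).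
by exists k.
Qed.

End Topo.
Section Ana.
Context {R : realType} {n : nat}.

Lemma ev_lt {u : nat -> R} {l : R} (Hu : u @ \oo --> l) {e : R} (e0 : 0 < e) :
  exists N, forall j, (N <= j)%N -> `|l - u j| < e.
Proof.
move: Hu => /cvgrPdist_lt H; have [N _ HN] := H e e0.
by exists N => j Hj; exact: HN.
Qed.

Lemma series_terms0 (u : nat -> R) (B : R) :
  (forall k, 0 <= u k) -> (forall N, \sum_(0 <= k < N) u k <= B) ->
  forall e, 0 < e -> exists N, forall j, (N <= j)%N -> u j < e.
Proof.
move=> u0 HB e e0.
have Hc : cvgn (series u).
  apply: nondecreasing_is_cvgn.
    by move=> a b ab; rewrite /series /=; apply: nondecreasing_series.
  by exists B => _ [N _ <-]; exact: HB.
have [N HN] := ev_lt (cvg_series_cvg_0 Hc) e0.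
exists N => j /HN; rewrite sub0r normrN ger0_norm //.
Qed.

Lemma frechet_cvx {phi : 'cV[R]_n -> R} {z w} : cvx_fun phi ->
  frechet_subdiff (fun x => (phi x)%:E) z w ->
  forall u, phi z + dotv w (u - z) <= phi u.
Proof.
move=> Hc [_ Hf] u.
set D := enorm (u - z).
have D0 : 0 <= D := enorm_ge0 _.
apply/ler_addgt0Pr => e e0.
set eps := e / (D + 1).
have eps0 : 0 < eps by rewrite divr_gt0 // ltr_wpDl.
have HeD : eps * D <= e.
  rewrite /eps mulrAC ler_pdivrMr ?ltr_wpDl // mulrDr mulr1 lerDl ltW //.
have [d d0 Hd] := Hf eps eps0.
set t := d / (d + D).
have dD : 0 < d + D by lra.
have t0 : 0 < t by rewrite divr_gt0.
have t0w := ltW t0.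
have t1 : t <= 1 by rewrite ler_pdivrMr ?dD // mul1r lerDl.
have Hzt : t *: u + (1 - t) *: z - z = t *: (u - z).
  by rewrite scalerBl scale1r scalerBr addrCA [LHS]addrC addKr.
have Hin : open_ball z d (t *: u + (1 - t) *: z).
  rewrite /open_ball /= Hzt enormZ ger0_norm // -/D /t.
  rewrite mulrAC ltr_pdivrMr ?dD //; nra.
have := Hd _ Hin; rewrite lee_fin /= Hzt dotvZr enormZ ger0_norm // -/D.
have := Hc u z t; rewrite t0w /= t1 => /(_ isT) Hcv Hfr.
have : t * (phi z + dotv w (u - z) - eps * D) <= t * phi u.
  have : phi z + t * dotv w (u - z) - eps * (t * D) <= t * phi u + (1 - t) * phi z.
    exact: le_trans Hfr Hcv.
  move=> H; nra.
rewrite ler_pM2l // => H; lra.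
Qed.

Lemma limiting_cvx {phi : 'cV[R]_n -> R} {y v} : cvx_fun phi ->
  limiting_subdiff (fun x => (phi x)%:E) y v ->
  forall u, phi y + dotv v (u - y) <= phi u.
Proof.
move=> Hc [_ [z [w [Hfr Hz Hphi Hw]]]] u.
apply/ler_addgt0Pr => e e0.
set K := enorm (u - y) + 1.
have K0 : 0 < K by rewrite ltr_wpDl // enorm_ge0.
set V := enorm v + 1.
have V0 : 0 < V by rewrite ltr_wpDl // enorm_ge0.
set a := Num.min 1 (Num.min (e / (3 * K)) (e / (3 * V))).
have a0 : 0 < a by rewrite !lt_min ltr01 !divr_gt0 ?mulr_gt0.
have a1 : a <= 1 by rewrite ge_min lexx.
have aK : a * K <= e / 3.
  have : a <= e / (3 * K) by rewrite /a !ge_min lexx orbT.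
  move=> h; have -> : e / 3 = e / (3 * K) * K by field; rewrite gt_eqF.
  by rewrite ler_pM2r.
have aV : a * V <= e / 3.
  have : a <= e / (3 * V) by rewrite /a !ge_min lexx !orbT.
  move=> h; have -> : e / 3 = e / (3 * V) * V by field; rewrite gt_eqF.
  by rewrite ler_pM2r.
have e3 : 0 < e / 3 by rewrite divr_gt0.
have [N1 H1] := ev_lt Hz a0.
have [N2 H2] := ev_lt Hphi e3.
have [N3 H3] := ev_lt Hw a0.
set j := maxn N1 (maxn N2 N3).
have /H1 h1 : (N1 <= j)%N by rewrite leq_maxl.
have /H2 h2 : (N2 <= j)%N by rewrite (leq_trans _ (leq_maxr _ _)) // leq_maxl.
have /H3 h3 : (N3 <= j)%N by rewrite (leq_trans _ (leq_maxr _ _)) // leq_maxr.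
move: h1 h3; rewrite !sub0r !normrN !(ger0_norm (enorm_ge0 _)) => h1 h3.
have Hj := frechet_cvx Hc (Hfr j) u.
move: h2; rewrite /= => h2.
have E : dotv v (u - y) - dotv (w j) (u - z j)
         = dotv (v - w j) (u - z j) + dotv v (z j - y).
  rewrite !dotvBl !dotvBr; ring.
have B1 : dotv (v - w j) (u - z j) <= a * K.
  apply: le_trans (ler_norm _) _; apply: le_trans (CS _ _) _.
  apply: ler_pM; rewrite ?enorm_ge0 //; first by rewrite enormB ltW.
  apply: le_trans (enorm_tri _ y _) _; rewrite /K lerD2l enormB.
  exact: ltW (lt_le_trans h1 a1).
have B2 : dotv v (z j - y) <= a * V.
  apply: le_trans (ler_norm _) _; apply: le_trans (CS _ _) _.
  rewrite [a * V]mulrC /V; apply: ler_pM; rewrite ?enorm_ge0 //.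
    by rewrite lerDl.
  exact: ltW h1.
have B3 : phi y - phi (z j) <= e / 3.
  by apply: le_trans (ler_norm _) (ltW h2).
lra.
Qed.

Lemma frechet_lip {f : 'cV[R]_n -> \bar R} {p z w : 'cV[R]_n} {r Lc : R} :
  (forall a b, open_ball p r a -> open_ball p r b ->
     f a \is a fin_num /\ `|fine (f a) - fine (f b)| <= Lc * enorm (a - b)) ->
  open_ball p r z -> frechet_subdiff f z w ->
  forall {eps}, 0 < eps -> enorm w <= `|Lc| + eps.
Proof.
move=> HL Hz [fz Hf] eps e0.
have [->|wn0] := eqVneq w 0.
  by rewrite enorm0 addr_ge0 // ltW.
set W := enorm w.
have W0 : 0 < W.
  rewrite lt0r enorm_ge0 andbT; apply/eqP => /(congr1 (fun x => x ^+ 2)).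
  by rewrite enorm_sq expr0n /= => /dotv_eq0 /eqP; rewrite (negbTE wn0).
have [d d0 Hd] := Hf eps e0.
set rho := r - enorm (z - p).
have rho0 : 0 < rho by rewrite subr_gt0.
set mm := Num.min d rho.
have mm0 : 0 < mm by rewrite lt_min d0.
set s := mm / (2 * W).
have s0 : 0 < s by rewrite divr_gt0 ?mulr_gt0.
have s0w := ltW s0.
have sW : s * W = mm / 2 by rewrite /s; field; rewrite gt_eqF.
set zz := z + s *: w.
have Hzz : enorm (zz - z) = mm / 2.
  by rewrite /zz addrC addKr enormZ ger0_norm.
have mmd0 : mm <= d by rewrite /mm ge_min lexx.
have mmr0 : mm <= rho by rewrite /mm ge_min lexx orbT.
have mmd : mm / 2 < d.
  by rewrite (lt_le_trans _ mmd0) // ltr_pdivrMr // ltr_pMr // ltr1n.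
have mmr : mm / 2 < rho.
  by rewrite (lt_le_trans _ mmr0) // ltr_pdivrMr // ltr_pMr // ltr1n.
have Hin : open_ball p r zz.
  rewrite /open_ball /=; apply: le_lt_trans (enorm_tri _ z _) _.
  by rewrite Hzz -ltrBrDr.
have [fzz Hlip] := HL zz z Hin Hz.
have := Hd zz; rewrite /open_ball /= Hzz => /(_ mmd).
have Hzs : zz - z = s *: w by rewrite /zz addrC addKr.
rewrite -(fineK fzz) lee_fin Hzs dotvZr -enorm_sq -/W => H.
have Hl : fine (f zz) - fine (f z) <= `|Lc| * (s * W).
  apply: le_trans (ler_norm _) _; apply: le_trans Hlip _.
  rewrite Hzz -sW; apply: ler_wpM2r; rewrite ?ler_norm // mulr_ge0 ?ltW //.
rewrite -sW in H.
have E2 : s * W ^+ 2 = s * W * W by rewrite expr2 mulrA.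
rewrite E2 in H.
have : s * W * W <= s * W * (`|Lc| + eps).
  move: H Hl; set P := s * W; set A := fine (f zz); set B := fine (f z).
  set Q := P * W; rewrite mulrDr (mulrC P `|Lc|) (mulrC P eps).
  set EP := eps * P; set LP := `|Lc| * P; lra.
by rewrite ler_pM2l // mulr_gt0.
Qed.

Lemma limiting_lip {f : 'cV[R]_n -> \bar R} {p x0 xi : 'cV[R]_n} {r Lc : R} :
  (forall a b, open_ball p r a -> open_ball p r b ->
     f a \is a fin_num /\ `|fine (f a) - fine (f b)| <= Lc * enorm (a - b)) ->
  open_ball p r x0 -> limiting_subdiff f x0 xi -> enorm xi <= `|Lc|.
Proof.
move=> HL Hx [_ [z [w [Hfr Hz _ Hw]]]].
apply/ler_addgt0Pr => e e0.
have e2 : 0 < e / 2 by rewrite divr_gt0.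
set rho := r - enorm (x0 - p).
have rho0 : 0 < rho by rewrite subr_gt0.
have [N1 H1] := ev_lt Hz rho0.
have [N3 H3] := ev_lt Hw e2.
set j := maxn N1 N3.
have /H1 h1 : (N1 <= j)%N by rewrite leq_maxl.
have /H3 h3 : (N3 <= j)%N by rewrite leq_maxr.
move: h1 h3; rewrite !sub0r !normrN !(ger0_norm (enorm_ge0 _)) => h1 h3.
have Hzj : open_ball p r (z j).
  rewrite /open_ball /=; apply: le_lt_trans (enorm_tri _ x0 _) _.
  by rewrite -ltrBrDr.
have := frechet_lip HL Hzj (Hfr j) e2.
have : enorm xi <= enorm (xi - w j) + enorm (w j).
  by rewrite (le_trans _ (enormD _ _)) // subrK.
rewrite enormB => Ht Hwj.
have : e / 2 + e / 2 = e by field.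
lra.
Qed.

End Ana.
Section Key.
Context {R : realType} {n m : nat}.

Lemma posinf_ge0 (w : 'cV[R]_m) : 0 <= posinf_norm w.
Proof.
rewrite /posinf_norm; elim/big_ind: _ => //.
  by move=> a b a0 b0; rewrite le_max a0.
by move=> i _; rewrite le_max lexx orbT.
Qed.

Lemma Gmodel_diff (g : 'I_m -> 'cV[R]_n -> R) (xk y z : 'cV[R]_n) (V : 'M[R]_(n, m))
   (L lam : 'cV[R]_m) :
  dotv lam (Gmodel g z xk V L) - dotv lam (Gmodel g y xk V L) =
  dotv (V *m lam) (z - y) + dotv L lam * dotv (y - xk) (z - y)
  + dotv L lam * (enorm (z - y) ^+ 2 / 2).
Proof.
rewrite /Gmodel.
have E : z - xk = (y - xk) + (z - y) by rewrite [RHS]addrC addrA subrK.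
rewrite E; set a := y - xk; set h := z - y; clearbody a h.
rewrite !dotvDr !dotvZr !dotv_mulmx trmxK !enorm_sq !dotvDl !dotvDr (dotvC L lam) (dotvC h a).
by field.
Qed.

Lemma Fsub_diff (g0xk : R) (xk xi y z : 'cV[R]_n) (Q : 'M[R]_n) (phi : 'cV[R]_n -> R) :
  Q^T = Q ->
  Fsub g0xk xk xi Q phi z - Fsub g0xk xk xi Q phi y =
  dotv xi (z - y) + dotv (Q *m (y - xk)) (z - y) + dotv (z - y) (Q *m (z - y)) / 2
  + phi z - phi y.
Proof.
move=> QT; rewrite /Fsub.
have E : z - xk = (y - xk) + (z - y) by rewrite [RHS]addrC addrA subrK.
rewrite E; set a := y - xk; set h := z - y; clearbody a h.
rewrite !mulmxDr !(dotvDl a, dotvDr a, dotvDr h, dotvDr xi).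
have E2 : dotv a (Q *m h) = dotv (Q *m a) h by rewrite dotv_mulmx QT.
have E3 : dotv h (Q *m a) = dotv (Q *m a) h by rewrite dotvC.
rewrite E2 E3; by field.
Qed.

End Key.

Section Key2.
Context {R : realType} {n m : nat}.

Lemma key_ineq (g : 'I_m -> 'cV[R]_n -> R) (g0xk : R) (xk y xb xi v : 'cV[R]_n)
  (Q : 'M[R]_n) (phi : 'cV[R]_n -> R) (V : 'M[R]_(n, m)) (L lam : 'cV[R]_m)
  (mu bC bS : R) :
  0 <= mu -> Q^T = Q -> (forall d, mu * enorm d ^+ 2 <= dotv d (Q *m d)) ->
  (forall u, phi y + dotv v (u - y) <= phi u) ->
  (forall i, 0 <= lam i 0) -> (forall i, 0 <= L i 0) ->
  nonpos (Gmodel g xb xk V L) ->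
  Fsub g0xk xk xi Q phi xb <= Fsub g0xk xk xi Q phi xk ->
  Num.max (- dotv lam (Gmodel g y xk V L)) 0 + posinf_norm (Gmodel g y xk V L)
    <= bC / 2 * enorm (y - xk) ^+ 2 ->
  enorm (xi + Q *m (y - xk) + v + V *m lam + dotv L lam *: (y - xk))
    <= bS * enorm (y - xk) ->
  mu / 2 * enorm (xb - y) ^+ 2 <=
    phi xk - phi y - dotv xi (y - xk) + bC / 2 * enorm (y - xk) ^+ 2
    + bS * enorm (y - xk) * enorm (xb - y).
Proof.
move=> mu0 QT HQ Hsub Hlam HL Hnp Hopt Hcomp Hstat.
have G1 := Gmodel_diff g xk y xb V L lam.
have F1 := Fsub_diff g0xk xk xi y xb Q phi QT.
have Hq := HQ (xb - y).
have Hqa := HQ (y - xk).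
have Hphi := Hsub xb.
have SL : 0 <= dotv L lam.
  by rewrite /dotv sumr_ge0 // => i _; rewrite mulr_ge0.
have ST : 0 <= dotv L lam * (enorm (xb - y) ^+ 2 / 2).
  by rewrite mulr_ge0 // divr_ge0 // sqr_ge0.
have Hn : dotv lam (Gmodel g xb xk V L) <= 0 by apply: dotv_sum_nonpos.
have Hc : - dotv lam (Gmodel g y xk V L) <= bC / 2 * enorm (y - xk) ^+ 2.
  apply: le_trans Hcomp; apply: (@le_trans _ _ (Num.max (- dotv lam (Gmodel g y xk V L)) 0)).
    by rewrite le_max lexx.
  by rewrite lerDl posinf_ge0.
have Hcs : - (bS * enorm (y - xk) * enorm (xb - y)) <=
    dotv (xi + Q *m (y - xk) + v + V *m lam + dotv L lam *: (y - xk)) (xb - y).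
  rewrite lerNl; apply: le_trans (ler_norm (- _)) _; rewrite normrN.
  apply: le_trans (CS _ _) _; apply: ler_wpM2r => //; exact: enorm_ge0.
rewrite !dotvDl dotvZl in Hcs.
have Fxk : Fsub g0xk xk xi Q phi xk = g0xk + phi xk.
  by rewrite /Fsub subrr dotv0r mulmx0 dotv0r mul0r !addr0.
have Fy : Fsub g0xk xk xi Q phi y =
    g0xk + dotv xi (y - xk) + dotv (y - xk) (Q *m (y - xk)) / 2 + phi y by [].
have m0 : 0 <= mu * enorm (y - xk) ^+ 2 by rewrite mulr_ge0 // sqr_ge0.
rewrite Fxk in Hopt.
have -> : mu / 2 * enorm (xb - y) ^+ 2 = mu * enorm (xb - y) ^+ 2 / 2 by rewrite mulrAC.
move: G1 F1 Hq Hqa Hphi ST Hn Hc Hcs Hopt Fy m0.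
set A1 := dotv lam _; set A2 := dotv lam _; set A3 := dotv L lam * _.
set A4 := dotv L lam * _; set A5 := mu * _; set A6 := mu * _.
set A7 := bC / 2 * _; set A8 := bS * _ * _.
move=> *; lra.
Qed.

End Key2.
Section Fin.
Context {R : realType}.

Lemma final_contra (mm e eps d D bS bC Lc : R) :
  0 < mm -> 0 < eps -> eps <= e -> 0 <= d -> d <= 1 -> 0 <= Lc -> 0 < bS -> 0 < bC ->
  mm / 2 * e ^+ 2 <= D + 2 * Lc * d + bC / 2 * d ^+ 2 + bS * d * e ->
  bS * d <= mm * eps / 4 -> (2 * Lc + bC) * d <= mm * eps ^+ 2 / 16 ->
  D < mm * eps ^+ 2 / 16 -> False.
Proof.
move=> mm0 e0 ee d0 d1 L0 bS0 bC0 H h1 h2 h3.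
have s1 : bC / 2 * d ^+ 2 <= bC / 2 * d.
  apply: ler_wpM2l; first by rewrite divr_ge0 // ltW.
  rewrite expr2; nra.
have s3 : bS * d * e <= mm * eps / 4 * e.
  by rewrite ler_wpM2r // (le_trans (ltW e0)).
have s4 : mm * eps * e <= mm * e * e.
  apply: ler_wpM2r; first exact: le_trans (ltW e0) ee.
  apply: ler_wpM2l => //; exact: ltW.
have s5 : mm * eps ^+ 2 <= mm * e ^+ 2.
  apply: ler_wpM2l; first exact: ltW.
  rewrite ler_sqr ?nnegrE //; [exact: ltW | exact: le_trans (ltW e0) ee].
have s6 : 0 < mm * e ^+ 2 by rewrite mulr_gt0 // exprn_gt0 // (lt_le_trans e0).
have E1 : mm / 2 * e ^+ 2 = mm * e ^+ 2 / 2 by rewrite mulrAC.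
have E2 : mm * eps / 4 * e = mm * eps * e / 4 by rewrite mulrAC.
have E3 : mm * e * e = mm * e ^+ 2 by rewrite expr2 mulrA.
have E4 : (2 * Lc + bC) * d = 2 * Lc * d + bC * d by rewrite mulrDl.
have E5 : bC / 2 * d = bC * d / 2 by rewrite mulrAC.
rewrite E1 in H; rewrite E2 in s3; rewrite E3 in s4; rewrite E4 in h2; rewrite E5 in s1.
have s7 : 0 <= bC * d by rewrite mulr_ge0 // ltW.
move: H s1 s3 s4 s5 s6 h2 h3 s7.
set A1 := mm * e ^+ 2; set A2 := bC / 2 * d ^+ 2; set A3 := bS * d * e.
set A4 := mm * eps * e; set A5 := mm * eps ^+ 2; set A6 := 2 * Lc * d; set A7 := bC * d.
move=> *; lra.
Qed.

Lemma sq_lt (a b : R) : 0 <= a -> 0 <= b -> a ^+ 2 < b ^+ 2 -> a < b.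
Proof. by move=> a0 b0; rewrite ltr_sqr ?nnegrE. Qed.

End Fin.

Lemma cluster_feas {R : realType} {n m : nat} (g : 'I_m -> 'cV[R]_n -> R)
  (x : nat -> 'cV[R]_n) (p : 'cV[R]_n) :
  (forall i z, loc_lipschitz_at (fun w => (g i w)%:E) z) ->
  (forall k, nonpos (gvec g (x k))) ->
  (forall eps, 0 < eps -> exists k, enorm (x k - p) < eps) ->
  nonpos (gvec g p).
Proof.
move=> HL Hf Hc i; rewrite /gvec mxE.
have [dd dd0 [Lc HLc]] := HL i p.
apply/ler_addgt0Pr => e e0; rewrite add0r.
have L1 : 0 < `|Lc| + 1 by rewrite ltr_wpDl.
set del := Num.min dd (e / (`|Lc| + 1)).
have del0 : 0 < del by rewrite lt_min dd0 divr_gt0.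
have del1 : del <= dd by rewrite /del ge_min lexx.
have del2 : del <= e / (`|Lc| + 1) by rewrite /del ge_min lexx orbT.
have [k Hk] := Hc del del0.
have Hxk : open_ball p dd (x k) by exact: lt_le_trans Hk del1.
have Hp : open_ball p dd p by rewrite /open_ball /= subrr enorm0.
have [_ H] := HLc _ _ Hxk Hp; rewrite /= in H.
have gx := Hf k i; rewrite /gvec mxE in gx.
have H2 : Lc * enorm (x k - p) <= `|Lc| * del.
  apply: le_trans (_ : `|Lc| * enorm (x k - p) <= _).
    by rewrite ler_wpM2r ?enorm_ge0 // ler_norm.
  by rewrite ler_wpM2l // ltW.
have H3 : `|Lc| * del < e.
  have H5 : `|Lc| * del <= `|Lc| * (e / (`|Lc| + 1)) by rewrite ler_wpM2l.
  apply: le_lt_trans H5 _.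
  rewrite mulrA ltr_pdivrMr // mulrDr mulr1 mulrC ltrDl //.
move: H; rewrite ler_norml => /andP [H4 _].
move: H4 H2 H3 gx; set A := Lc * _; set B := `|Lc| * del; move=> *; lra.
Qed.

Theorem lemma4p2 (R : realType) (n m : nat)
  (g0 : 'cV[R]_n -> \bar R) (g : 'I_m -> 'cV[R]_n -> R) (phi : 'cV[R]_n -> R)
  (O : set 'cV[R]_n)
  (* Assumption 1 *)
  (hg0 : forall z, g0 z != -oo%E)
  (hOopen : open O) (hOconv : cvx_set O)
  (hGammaO : forall z, nonpos (gvec g z) -> O z)
  (hGamma_ne : exists z, nonpos (gvec g z))
  (hg0reg : forall z, O z -> loc_lipschitz_at g0 z /\ upperC2_at g0 z)
  (hgreg : forall (i : 'I_m) z,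
      loc_lipschitz_at (fun w => (g i w)%:E) z /\ upperC2_at (fun w => (g i w)%:E) z)
  (hphi : cvx_fun phi)
  (hFlb : exists c : R, forall z, nonpos (gvec g z) -> (c%:E <= Fobj g0 g phi z)%E)
  (* parameters of iMBA *)
  (mu_min mu_max L_min L_max M beta_C beta_S alpha tau : R)
  (hpar : [/\ 0 < mu_min, mu_min <= mu_max, 0 < L_min, L_min <= L_max &
           [/\ 0 < M, 0 < beta_C, 0 < beta_S, 0 < alpha & 1 < tau]])
  (* sequences generated by iMBA *)
  (x xi : nat -> 'cV[R]_n) (V : nat -> 'M[R]_(n, m))
  (mu : nat -> nat -> R) (L : nat -> nat -> 'cV[R]_m) (Q : nat -> nat -> 'M[R]_n)
  (xbar y v : nat -> nat -> 'cV[R]_n) (lam : nat -> nat -> 'cV[R]_m)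
  (jk : nat -> nat)
  (hx0 : nonpos (gvec g (x 0%N)))
  (hxi : forall k, limiting_subdiff g0 (x k) (xi k))
  (hV : forall k (i : 'I_m), limiting_subdiff (fun w => (g i w)%:E) (x k) (col i (V k)))
  (hmu0 : forall k, mu_min <= mu k 0%N <= mu_max)
  (hL0 : forall k (i : 'I_m), L_min <= L k 0%N i 0 <= L_max)
  (hQ : forall k j, (j <= jk k)%N ->
      (Q k j)^T = Q k j /\
      forall d : 'cV[R]_n, mu k j * enorm d ^+ 2 <= dotv d (Q k j *m d)
                             <= (mu k j + M) * enorm d ^+ 2)
  (hxbar : forall k j, (j <= jk k)%N ->
      nonpos (Gmodel g (xbar k j) (x k) (V k) (L k j)) /\
      forall z, nonpos (Gmodel g z (x k) (V k) (L k j)) ->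
        Fsub (fine (g0 (x k))) (x k) (xi k) (Q k j) phi (xbar k j)
        <= Fsub (fine (g0 (x k))) (x k) (xi k) (Q k j) phi z)
  (hinexact : forall k j, (j <= jk k)%N ->
      [/\ limiting_subdiff (fun w => (phi w)%:E) (y k j) (v k j),
          forall i : 'I_m, 0 <= lam k j i 0,
          Fsub (fine (g0 (x k))) (x k) (xi k) (Q k j) phi (y k j)
            <= Fsub (fine (g0 (x k))) (x k) (xi k) (Q k j) phi (x k),
          Num.max (- dotv (lam k j) (Gmodel g (y k j) (x k) (V k) (L k j))) 0
            + posinf_norm (Gmodel g (y k j) (x k) (V k) (L k j))
            <= beta_C / 2 * enorm (y k j - x k) ^+ 2 &
          enorm (xi k + Q k j *m (y k j - x k) + v k j + V k *m lam k j
                 + dotv (L k j) (lam k j) *: (y k j - x k))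
            <= beta_S * enorm (y k j - x k)])
  (hreject : forall k j, (j < jk k)%N ->
      ~ (nonpos (gvec g (y k j)) /\
         (Fobj g0 g phi (y k j)
            <= Fobj g0 g phi (x k) - (alpha / 2 * enorm (y k j - x k) ^+ 2)%:E)%E) /\
      ((~ nonpos (gvec g (y k j)) /\ L k j.+1 = tau *: L k j /\ mu k j.+1 = mu k j) \/
       (nonpos (gvec g (y k j)) /\ L k j.+1 = L k j /\ mu k j.+1 = tau * mu k j)))
  (haccept : forall k,
      nonpos (gvec g (y k (jk k))) /\
      (Fobj g0 g phi (y k (jk k))
         <= Fobj g0 g phi (x k) - (alpha / 2 * enorm (y k (jk k) - x k) ^+ 2)%:E)%E)
  (hxnext : forall k, x k.+1 = y k (jk k))
  (* Assumption 2 *)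
  (hA2 : forall k j, (j <= jk k)%N ->
      metric_subregular
        (fun z => [set w | nonpos (Gmodel g z (x k) (V k) (L k j) - w)])
        (xbar k j) 0)
  (* Assumption 3 *)
  (hA3 : exists c : R, forall k, enorm (x k) <= c) :
  cluster_points x !=set0 /\ compact (cluster_points x) /\
  (fun k => enorm (x k - xbar k (jk k))) @ \oo --> 0 /\
  (fun k => enorm (x k.+1 - xbar k (jk k))) @ \oo --> 0.
Proof.
case: hpar => mu0 muM L0 LM [M0 bC0 bS0 al0 tau1].
have [cb hcb] := hA3.
have [cF hcF] := hFlb.
have feas : forall k, nonpos (gvec g (x k)).
  elim => [//|k IH]; rewrite hxnext; exact: (haccept k).1.
have hmuL : forall k j, (j <= jk k)%N ->
    mu_min <= mu k j /\ forall i, 0 <= L k j i 0.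
  move=> k; elim => [_|j IH Hj].
    split; first by case/andP: (hmu0 k).
    move=> i; case/andP: (hL0 k i) => H _; apply: le_trans H; exact: ltW.
  have [IH1 IH2] := IH (ltnW Hj).
  case: (hreject k j Hj) => _ [[_ [-> ->]]|[_ [-> ->]]].
    split => // i; rewrite mxE mulr_ge0 //; apply: ltW; exact: lt_trans ltr01 tau1.
  have mp : 0 <= mu k j by apply: le_trans (ltW mu0) (IH1).
  split => //; apply: le_trans (IH1) _.
  by rewrite ler_peMl // ltW.
have fin : forall k, g0 (x k) \is a fin_num by move=> k; case: (hxi k).
pose Fv k := fine (g0 (x k)) + phi (x k).
have FobjE : forall k, Fobj g0 g phi (x k) = (Fv k)%:E.
  move=> k; rewrite /Fobj /Fv asboolT; last exact: feas.
  by move: (fin k); case: (g0 (x k)) => //= r _; rewrite adde0.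
pose d k := enorm (x k.+1 - x k).
have dec : forall k, alpha / 2 * d k ^+ 2 <= Fv k - Fv k.+1.
  move=> k; have := (haccept k).2; rewrite -hxnext FobjE FobjE -EFinB lee_fin.
  rewrite /d; lra.
have lb : forall k, cF <= Fv k.
  by move=> k; have := hcF _ (feas k); rewrite FobjE lee_fin.
pose Dl k := Fv k - Fv k.+1.
have Dl0 : forall k, 0 <= Dl k.
  move=> k; apply: le_trans (dec k); rewrite mulr_ge0 ?sqr_ge0 // divr_ge0 // ltW //.
have Dlsmall : forall e, 0 < e -> exists N, forall j, (N <= j)%N -> Dl j < e.
  apply: (@series_terms0 _ Dl (Fv 0%N - cF)) => // N.
  have -> : \sum_(0 <= k < N) Dl k = Fv 0%N - Fv N.
    rewrite /Dl -opprB -(telescope_sumr Fv (leq0n N)) -sumrN.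
    by apply: eq_bigr => k _; rewrite opprB.
  by rewrite lerD2l lerN2.
have dsmall : forall e, 0 < e -> exists N, forall j, (N <= j)%N -> d j < e.
  move=> e e0.
  have pos : 0 < alpha / 2 * e ^+ 2 by rewrite mulr_gt0 ?divr_gt0 ?exprn_gt0.
  have [N HN] := Dlsmall _ pos.
  exists N => j /HN Hj; apply: sq_lt; rewrite ?enorm_ge0 ?ltW //.
  by have := le_lt_trans (dec j) Hj; rewrite ltr_pM2l // divr_gt0.
have econv : (fun k => enorm (x k.+1 - xbar k (jk k))) @ \oo --> 0.
  apply/cvgrPdist_lt => eps eps0.
  have [[N0 HN]|Hno] := pselect (exists N, forall k, (N <= k)%N ->
      enorm (x k.+1 - xbar k (jk k)) < eps).
    exists N0 => // k /= Hk; rewrite sub0r normrN ger0_norm ?enorm_ge0 //; exact: HN.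
  have HS : forall N, exists2 k, (N <= k)%N & eps <= enorm (x k.+1 - xbar k (jk k)).
    move=> N; apply: contrapT => H; apply: Hno; exists N => k Hk.
    rewrite ltNge; apply/negP => He; apply: H; by exists k.
  have [p _ Hp] := bounded_cluster x cb
      [set k | eps <= enorm (x k.+1 - xbar k (jk k))] hcb HS.
  have pfeas : nonpos (gvec g p).
    apply: (cluster_feas g x p) => //.
      by move=> i z; case: (hgreg i z).
    by move=> e e0; have [k [_ _ Hk]] := Hp e e0 0%N; exists k.
  have [[r r0 [Lc HLc]] _] := hg0reg p (hGammaO p pfeas).
  set mm := mu_min.
  set LL := `|Lc|.
  have LL0 : 0 <= LL := normr_ge0 _.
  set th := mm * eps ^+ 2 / 16.
  have th0 : 0 < th by rewrite /th divr_gt0 // mulr_gt0 // exprn_gt0.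
  have CB : 0 < 2 * LL + beta_C by rewrite ltr_wpDl // mulr_ge0.
  have r2 : 0 < r / 2 by rewrite divr_gt0.
  have eS : 0 < mm * eps / 4 / beta_S by rewrite !divr_gt0 // mulr_gt0.
  have eC : 0 < th / (2 * LL + beta_C) by rewrite divr_gt0.
  set del := Num.min (Num.min 1 (r / 2))
                     (Num.min (mm * eps / 4 / beta_S) (th / (2 * LL + beta_C))).
  have del0 : 0 < del by rewrite /del !lt_min ltr01 r2 eS eC.
  have dl1 : del <= 1 by rewrite /del !ge_min lexx.
  have dl2 : del <= r / 2 by rewrite /del !ge_min lexx !orbT.
  have dl3 : del <= mm * eps / 4 / beta_S by rewrite /del !ge_min lexx !orbT.
  have dl4 : del <= th / (2 * LL + beta_C) by rewrite /del !ge_min lexx !orbT.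
  have [N1 HN1] := Dlsmall th th0.
  have [N2 HN2] := dsmall del del0.
  have [k [Hk Sk Hpk]] := Hp (r / 2) r2 (maxn N1 N2).
  have hD := HN1 k (leq_trans (leq_maxl _ _) Hk).
  have hd := HN2 k (leq_trans (leq_maxr _ _) Hk).
  have dk0 : 0 <= d k := enorm_ge0 _.
  have dk1 : d k <= 1 by apply: le_trans (ltW hd) dl1.
  have dS : beta_S * d k <= mm * eps / 4.
    by rewrite mulrC -ler_pdivlMr //; apply: le_trans (ltW hd) dl3.
  have dC : (2 * LL + beta_C) * d k <= th.
    by rewrite mulrC -ler_pdivlMr //; apply: le_trans (ltW hd) dl4.
  have Bxk : open_ball p r (x k).
    by rewrite /open_ball /=; apply: lt_trans Hpk _; rewrite ltr_pdivrMr // ltr_pMr // ltr1n.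
  have Bxk1 : open_ball p r (x k.+1).
    rewrite /open_ball /=; apply: le_lt_trans (enorm_tri _ (x k) _) _.
    have : r / 2 + r / 2 = r by field.
    have := lt_le_trans hd dl2; rewrite -/(d k); lra.
  have [_ Hlip] := HLc _ _ Bxk1 Bxk.
  have Hxi := limiting_lip HLc Bxk (hxi k).
  set j := jk k.
  have [Qsym Qb] := hQ k j (leqnn _).
  have [mmu HLk] := hmuL k j (leqnn _).
  have [Hv Hlam Hdesc Hcomp Hstat] := hinexact k j (leqnn _).
  have [Hxb Hopt] := hxbar k j (leqnn _).
  have Gxk : Gmodel g (x k) (x k) (V k) (L k j) = gvec g (x k).
    by rewrite /Gmodel subrr mulmx0 addr0 enorm0 expr0n /= mul0r scale0r addr0.
  have Hopt' := Hopt (x k) (ltac:(rewrite Gxk; exact: feas)).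
  have Hsub := limiting_cvx hphi Hv.
  have mu0' : 0 <= mu k j by apply: le_trans (ltW mu0) mmu.
  have K := key_ineq g (fine (g0 (x k))) (x k) (y k j) (xbar k j) (xi k) (v k j)
    (Q k j) phi (V k) (L k j) (lam k j) (mu k j) beta_C beta_S mu0' Qsym
    (fun dd => proj1 (andP (Qb dd))) Hsub Hlam HLk Hxb Hopt' Hcomp Hstat.
  rewrite -(hxnext k) -/j (enormB (xbar k j)) -/(d k) in K.
  exfalso.
  set e := enorm (x k.+1 - xbar k j) in K Sk *.
  have Hm : mm / 2 * e ^+ 2 <= mu k j / 2 * e ^+ 2.
    by rewrite ler_wpM2r ?sqr_ge0 // ler_pM2r.
  have Hph : phi (x k) - phi (x k.+1) = Dl k + (fine (g0 (x k.+1)) - fine (g0 (x k))).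
    by rewrite /Dl /Fv; ring.
  have Hg : fine (g0 (x k.+1)) - fine (g0 (x k)) <= LL * d k.
    apply: le_trans (ler_norm _) (le_trans Hlip _).
    by rewrite -/(d k) ler_wpM2r // ler_norm.
  have Hx : - dotv (xi k) (x k.+1 - x k) <= LL * d k.
    apply: le_trans (ler_norm (- _)) _; rewrite normrN.
    by apply: le_trans (CS _ _) _; rewrite -/(d k) ler_wpM2r.
  apply: (@final_contra _ mm e eps (d k) (Dl k) beta_S beta_C LL mu0 eps0 Sk dk0 dk1
     LL0 bS0 bC0 _ dS dC hD).
  move: K Hm Hph Hg Hx.
  set A1 := mu k j / 2 * _; set A2 := mm / 2 * _; set A3 := LL * d k.
  set A4 := beta_C / 2 * _; set A5 := beta_S * _ * _; set A6 := dotv _ _.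
  have -> : 2 * LL * d k = 2 * A3 by rewrite /A3 mulrA.
  move=> *; lra.
split.
  have [p _ Hp] := bounded_cluster x cb setT hcb
    (fun N => @ex_intro2 _ (fun k => (N <= k)%N) (fun k => setT k) N (leqnn N) I).
  exists p => eps e0 N; have [k [Hk _ Hx]] := Hp eps e0 N; by exists k.
split.
  apply: (subclosed_compact _ (Box_compact cb)).
    move=> p Hp eps e0 N.
    have e2 : 0 < eps / 2 by rewrite divr_gt0.
    have [q [Hq Hqp]] := Hp _ (nbhs_enorm p (eps / 2) e2).
    have [k Hk Hxk] := Hq (eps / 2) e2 N.
    exists k => //; apply: le_lt_trans (enorm_tri _ q _) _.
    have : eps / 2 + eps / 2 = eps by field.
    rewrite /= in Hqp; lra.
  move=> p Hp i; apply: le_trans (entry_le_enorm p i) _.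
  apply/ler_addgt0Pr => e e0; have [k _ Hk] := Hp e e0 0%N.
  have := enormD (p - x k) (x k); rewrite subrK (enormB p) => H.
  have := hcb k; lra.
split; last exact: econv.
apply/cvgrPdist_lt => eps e0.
have e2 : 0 < eps / 2 by rewrite divr_gt0.
have [N1 H1] := dsmall _ e2.
have [N2 H2] := ev_lt econv e2.
exists (maxn N1 N2) => // k /= Hk.
rewrite sub0r normrN ger0_norm ?enorm_ge0 //.
apply: le_lt_trans (enorm_tri _ (x k.+1) _) _.
have h1 := H1 k (leq_trans (leq_maxl _ _) Hk).
have h2 := H2 k (leq_trans (leq_maxr _ _) Hk).
rewrite sub0r normrN ger0_norm ?enorm_ge0 // in h2.
rewrite (enormB (x k)) -/(d k).
have : eps / 2 + eps / 2 = eps by field.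
lra.
Qed.
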